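(* Let $(X,\|\cdot\|_X)\subset(Y,\|\cdot\|_Y)$ be normed spaces, $\theta\ge0$, $m\in\mathbb N_*$, $d\in\mathbb N_*$, $e\in\mathcal E$, and let $y\in Y$ satisfy: there exists $a>1$ such that $$\limsup_{R\to\infty}\frac{L_a(R)^{1+\frac{\theta}{2m}}}{R}\,\beta_e\big(L_a(R)^{d/2m}\big)\,d_Y(y,B_X(R))<\infty.$$ Then there exists a sequence $(x_n)_{n\ge1}\subset X$ such that $$\sum_{n=1}^\infty\Big(2^{n\theta}\beta_e(2^{nd})\|y-x_n\|_Y+2^{-2nm}\|x_n\|_X\Big)<\infty.$$
   Context: Young function: $e:\mathbb R\to\mathbb R_+$ symmetric, strictly convex, $e(0)=0$. $\mathcal E$: Young functions with $e(2s)\le\lambda e(s)$ for some $\lambda>0$ and $s\mapsto e(s)/s$ nondecreasing on $(0,\infty)$. $e^{-1}(a)=\sup\{c:e(c)\le a\}$, $\beta_e(R)=R/e^{-1}(R)$. $L_a(R)=R(\ln R)^a$. $B_X(R)=\{x\in X:\|x\|_X\le R\}$, $d_Y(y,A)=\inf_{x\in A}\|y-x\|_Y$. *)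

(* Defs.v *)
From Stdlib Require Import Reals Lra ClassicalEpsilon.
Open Scope R_scope.

Record NormedSpace := {
  carrier :> Type;
  vzero : carrier;
  vadd : carrier -> carrier -> carrier;
  vopp : carrier -> carrier;
  vscal : R -> carrier -> carrier;
  vnorm : carrier -> R;
  vadd_assoc : forall u v w, vadd u (vadd v w) = vadd (vadd u v) w;
  vadd_comm : forall u v, vadd u v = vadd v u;
  vadd_0 : forall u, vadd u vzero = u;
  vadd_opp : forall u, vadd u (vopp u) = vzero;
  vscal_1 : forall u, vscal 1 u = u;
  vscal_assoc : forall a b u, vscal a (vscal b u) = vscal (a * b) u;
  vscal_distr_l : forall a u v, vscal a (vadd u v) = vadd (vscal a u) (vscal a v);
  vscal_distr_r : forall a b u, vscal (a + b) u = vadd (vscal a u) (vscal b u);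
  vnorm_pos : forall u, 0 <= vnorm u;
  vnorm_eq0 : forall u, vnorm u = 0 -> u = vzero;
  vnorm_scal : forall a u, vnorm (vscal a u) = Rabs a * vnorm u;
  vnorm_tri : forall u v, vnorm (vadd u v) <= vnorm u + vnorm v
}.

Definition vsub (Y : NormedSpace) (u v : Y) : Y := vadd Y u (vopp Y v).

(* A normed space X contained in Y: a linear subspace of Y (predicate mem)
   equipped with its own norm nX (only meaningful on elements of mem). *)
Record SubNormed (Y : NormedSpace) := {
  mem : Y -> Prop;
  nX : Y -> R;
  mem_0 : mem (vzero Y);
  mem_add : forall u v, mem u -> mem v -> mem (vadd Y u v);
  mem_scal : forall a u, mem u -> mem (vscal Y a u);
  nX_pos : forall u, mem u -> 0 <= nX u;
  nX_eq0 : forall u, mem u -> nX u = 0 -> u = vzero Y;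
  nX_scal : forall a u, mem u -> nX (vscal Y a u) = Rabs a * nX u;
  nX_tri : forall u v, mem u -> mem v -> nX (vadd Y u v) <= nX u + nX v
}.

Arguments mem {Y} _ _.
Arguments nX {Y} _ _.

Definition Young (e : R -> R) : Prop :=
  (forall s, 0 <= e s) /\
  (forall s, e (- s) = e s) /\
  (forall x y t, x <> y -> 0 < t < 1 ->
      e (t * x + (1 - t) * y) < t * e x + (1 - t) * e y) /\
  e 0 = 0.

Definition classE (e : R -> R) : Prop :=
  Young e /\
  (exists lam, 0 < lam /\ forall s, e (2 * s) <= lam * e s) /\
  (forall s t, 0 < s -> s <= t -> e s / s <= e t / t).

Definition einv (e : R -> R) (a : R) : R :=
  epsilon (inhabits 0) (fun r => is_lub (fun c => e c <= a) r).

Definition beta (e : R -> R) (r : R) : R := r / einv e r.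

Definition La (a r : R) : R := r * Rpower (ln r) a.

Definition is_glb (P : R -> Prop) (m : R) : Prop :=
  (forall x, P x -> m <= x) /\ (forall m', (forall x, P x -> m' <= x) -> m' <= m).

Definition distY (Y : NormedSpace) (X : SubNormed Y) (y : Y) (r : R) : R :=
  epsilon (inhabits 0)
    (fun m => is_glb (fun t => exists x, mem X x /\ nX X x <= r /\
                                         t = vnorm Y (vsub Y y x)) m).

(* Main.v *)
Require Import Defs.
From Stdlib Require Import Reals Lra Lia ClassicalEpsilon Classical.
Open Scope R_scope.

Lemma ln_le_sub1 x : 0 < x -> ln x <= x - 1.
Proof. intro Hx. pose proof (exp_ineq1_le (ln x)). rewrite exp_ln in H; lra. Qed.

Lemma ln_lt_2sqrt y : 0 < y -> ln y < 2 * sqrt y.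
Proof.
  intro Hy. assert (Hs : 0 < sqrt y) by (apply sqrt_lt_R0; lra).
  replace (ln y) with (ln (sqrt y * sqrt y)) by (rewrite sqrt_sqrt; lra).
  rewrite ln_mult by lra. pose proof (ln_le_sub1 _ Hs). lra.
Qed.

Lemma key_lo a y : 0 < a -> 4 * a * a <= y -> a * ln y < y.
Proof.
  intros Ha Hy. assert (Hy0 : 0 < y) by nra.
  pose proof (ln_lt_2sqrt _ Hy0).
  assert (H2 : 2 * a <= sqrt y).
  { replace (2*a) with (sqrt (4*a*a)). apply sqrt_le_1_alt; lra.
    replace (4*a*a) with ((2*a)*(2*a)) by ring. rewrite sqrt_square; lra. }
  pose proof (sqrt_sqrt y ltac:(lra)).
  assert (0 <= sqrt y) by apply sqrt_pos. nra.
Qed.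

Lemma pseries_step b k : 0 < b ->
  exp (-(1+b) * ln (INR k + 2)) <=
  / b * (exp (- b * ln (INR k + 1)) - exp (- b * ln (INR k + 2))).
Proof.
  intro Hb. pose proof (pos_INR k) as Hk.
  set (u := INR k + 1). set (v := INR k + 2).
  assert (Hu : 0 < u) by (unfold u; lra). assert (Hv : 0 < v) by (unfold v; lra).
  set (E := exp (- b * ln v)). assert (HE : 0 < E) by apply exp_pos.
  assert (Hl : ln v - ln u >= / v).
  { pose proof (ln_le_sub1 (u * / v) ltac:(apply Rmult_lt_0_compat; [lra| apply Rinv_0_lt_compat; lra])).
    rewrite ln_mult, ln_Rinv in H by (try apply Rinv_0_lt_compat; lra).
    assert (u * / v - 1 = - / v) by (unfold u, v; field; lra). lra. }
  assert (H1 : exp (- b * ln u) = E * exp (b * (ln v - ln u))).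
  { unfold E. rewrite <- exp_plus. f_equal. ring. }
  assert (H2 : exp (-(1+b) * ln v) = E * / v).
  { unfold E. replace (/ v) with (exp (- ln v)) by (rewrite exp_Ropp, exp_ln; lra).
    rewrite <- exp_plus. f_equal. ring. }
  rewrite H1, H2. pose proof (exp_ineq1_le (b * (ln v - ln u))).
  assert (E * exp (b * (ln v - ln u)) - E >= E * (b * / v)).
  { assert (exp (b * (ln v - ln u)) - 1 >= b * / v) by nra. nra. }
  set (Z := exp (b * (ln v - ln u))) in *.
  replace (/ b * (E * Z - E)) with ((E * Z - E) / b) by (field; lra).
  apply Rmult_le_reg_r with b; [lra|].
  replace ((E * Z - E) / b * b) with (E * Z - E) by (field; lra). nra.
Qed.

Lemma sum_mono (t : nat -> R) : (forall k, 0 <= t k) ->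
  forall N j, sum_f_R0 t N <= sum_f_R0 t (N + j).
Proof.
  intros Ht N j. induction j. rewrite Nat.add_0_r; lra.
  rewrite Nat.add_succ_r, tech5. specialize (Ht (S (N+j))). lra.
Qed.

Lemma sum_bound (t h : nat -> R) (K0 : nat) :
  (forall k, 0 <= t k) -> (forall k, 0 <= h k) ->
  (forall k, (K0 <= k)%nat -> t k <= h k - h (S k)) ->
  forall N, sum_f_R0 t N <= sum_f_R0 t K0 + h (S K0).
Proof.
  intros Ht Hh Hth.
  assert (Hj : forall j, sum_f_R0 t (K0 + j) + h (S (K0 + j)) <= sum_f_R0 t K0 + h (S K0)).
  { induction j. rewrite Nat.add_0_r; lra.
    rewrite Nat.add_succ_r, tech5. specialize (Hth (S (K0 + j)) ltac:(lia)). lra. }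
  intro N. destruct (Nat.le_gt_cases K0 N).
  - replace N with (K0 + (N - K0))%nat by lia. specialize (Hj (N - K0)%nat).
    pose proof (Hh (S (K0 + (N - K0)))). lra.
  - pose proof (sum_mono t Ht N (K0 - N)). replace (N + (K0 - N))%nat with K0 in H0 by lia.
    specialize (Hh (S K0)). lra.
Qed.

Lemma series_cv (t h : nat -> R) (K0 : nat) :
  (forall k, 0 <= t k) -> (forall k, 0 <= h k) ->
  (forall k, (K0 <= k)%nat -> t k <= h k - h (S k)) ->
  exists l, infinite_sum t l.
Proof.
  intros Ht Hh Hth.
  assert (Hg : Un_growing (sum_f_R0 t)).
  { intro n. rewrite tech5. specialize (Ht (S n)). lra. }
  assert (Hb : has_ub (sum_f_R0 t)).
  { exists (sum_f_R0 t K0 + h (S K0)). intros z [n ->]. apply (sum_bound t h K0); auto. }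
  destruct (growing_cv _ Hg Hb) as [l Hl]. exists l. exact Hl.
Qed.

Lemma div_nonneg a b : 0 <= a -> 0 < b -> 0 <= a / b.
Proof. intros. unfold Rdiv. apply Rmult_le_pos; [lra| apply Rlt_le, Rinv_0_lt_compat; lra]. Qed.

Lemma e1_pos e : classE e -> 0 < e 1.
Proof.
  intros [[H0 [Hs [Hc He0]]] _].
  specialize (Hc 1 (-1) (/2) ltac:(lra) ltac:(lra)).
  replace (/ 2 * 1 + (1 - / 2) * -1) with 0 in Hc by field.
  assert (e (-1) = e 1) by (replace (-1) with (-(1)) by ring; apply Hs). lra.
Qed.

Lemma einv_nonneg e r : classE e -> 0 <= r -> 0 <= einv e r.
Proof.
  intros HE Hr. pose proof (e1_pos e HE) as H1.
  destruct HE as [[H0 [Hs [Hc He0]]] [_ Hmon]].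
  set (E := fun c => e c <= r).
  assert (Hex : exists m, is_lub E m).
  { destruct (completeness E) as [m Hm].
    - exists (1 + r / e 1). intros c Hc'. unfold E in Hc'.
      destruct (Rle_or_lt c 1). assert (0 <= r / e 1) by (apply div_nonneg; lra). lra.
      specialize (Hmon 1 c ltac:(lra) ltac:(lra)).
      assert (c * e 1 <= e c).
      { apply Rmult_le_compat_r with (r := c) in Hmon; [|lra].
        replace (e 1 / 1 * c) with (c * e 1) in Hmon by field.
        replace (e c / c * c) with (e c) in Hmon by (field; lra). lra. }
      assert (c <= r / e 1).
      { apply Rmult_le_reg_r with (e 1); [lra|]. replace (r / e 1 * e 1) with r by (field; lra). lra. }
      lra.
    - exists 0. unfold E. lra.
    - exists m; exact Hm. }
  pose proof (epsilon_spec (inhabits 0) (fun m => is_lub E m) Hex) as Hs'.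
  unfold einv. destruct Hs' as [Hub _]. apply Hub. unfold E. lra.
Qed.

Lemma beta_nonneg e r : classE e -> 0 <= r -> 0 <= beta e r.
Proof.
  intros HE Hr. unfold beta. pose proof (einv_nonneg e r HE Hr).
  destruct (Req_dec (einv e r) 0) as [H0|H0].
  - rewrite H0. unfold Rdiv. rewrite Rinv_0. lra.
  - apply div_nonneg; lra.
Qed.

Lemma dist_spec (Y : NormedSpace) (X : SubNormed Y) (y : Y) (r : R) :
  0 <= r -> 0 <= distY Y X y r /\
  forall eps, 0 < eps -> exists x, mem X x /\ nX X x <= r /\
     vnorm Y (vsub Y y x) < distY Y X y r + eps.
Proof.
  intro Hr.
  set (S := fun t => exists x, mem X x /\ nX X x <= r /\ t = vnorm Y (vsub Y y x)).
  set (z0 := vscal Y 0 (vzero Y)).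
  assert (Hz : mem X z0) by (apply mem_scal, mem_0).
  assert (Hzn : nX X z0 = 0) by (unfold z0; rewrite nX_scal by apply mem_0; rewrite Rabs_R0; lra).
  assert (Hex : exists m, is_glb S m).
  { destruct (completeness (fun u => S (- u))) as [m Hm].
    - exists 0. intros u [x [_ [_ Hu]]]. pose proof (vnorm_pos Y (vsub Y y x)). lra.
    - exists (- vnorm Y (vsub Y y z0)). exists z0. repeat split; auto. lra. rewrite Ropp_involutive; auto.
    - exists (- m). destruct Hm as [Hm1 Hm2]. split.
      + intros t Ht. assert (- t <= m). apply Hm1. rewrite Ropp_involutive; auto. lra.
      + intros m' Hm'. assert (m <= - m'). apply Hm2. intros u Hu. specialize (Hm' _ Hu). lra. lra. }
  pose proof (epsilon_spec (inhabits 0) (fun m => is_glb S m) Hex) as Hs.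
  fold (distY Y X y r) in Hs. change (is_glb S (distY Y X y r)) in Hs.
  destruct Hs as [Hs1 Hs2]. split.
  - apply Hs2. intros t [x [_ [_ ->]]]. apply vnorm_pos.
  - intros eps Heps. apply NNPP. intro Hno.
    assert (distY Y X y r + eps <= distY Y X y r); [|lra].
    apply Hs2. intros t [x [Hx [Hxr ->]]]. apply Rnot_lt_le. intro Hlt. apply Hno. exists x. auto.
Qed.

Lemma La_cont a c r : 1 < r -> continuity_pt (fun r => La a r - c) r.
Proof.
  intro Hr. unfold La, Rpower.
  assert (Hln : 0 < ln r) by (rewrite <- ln_1; apply ln_increasing; lra).
  apply continuity_pt_minus; [|apply continuity_pt_const; intros ? ?; reflexivity].
  apply continuity_pt_mult; [apply derivable_continuous_pt, derivable_pt_id|].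
  change (continuity_pt (comp exp (fun x => a * ln (ln x))) r).
  apply continuity_pt_comp; [| apply derivable_continuous_pt, derivable_pt_exp].
  apply continuity_pt_scal.
  change (continuity_pt (comp ln ln) r).
  apply continuity_pt_comp; apply derivable_continuous_pt.
  - exists (/ r). apply derivable_pt_lim_ln. lra.
  - exists (/ ln r). apply derivable_pt_lim_ln. lra.
Qed.

Lemma exp_pow2 k : 2 ^ k = exp (INR k * ln 2).
Proof. rewrite <- Rpower_pow by lra. reflexivity. Qed.

Lemma Rpower_exp z p : Rpower (exp z) p = exp (p * z).
Proof. unfold Rpower. rewrite ln_exp. reflexivity. Qed.

Lemma ln_le' x y : 0 < x -> x <= y -> ln x <= ln y.
Proof. intros Hx Hxy. destruct (Rle_lt_or_eq_dec _ _ Hxy) as [H|H].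
  apply Rlt_le, ln_increasing; lra. rewrite H; lra. Qed.

Lemma exp_le' x y : x <= y -> exp x <= exp y.
Proof. intros Hxy. destruct (Rle_lt_or_eq_dec _ _ Hxy) as [H|H].
  apply Rlt_le, exp_increasing; lra. rewrite H; lra. Qed.

Theorem mainTheorem16 (Y : NormedSpace) (X : SubNormed Y)
  (theta : R) (m d : nat) (e : R -> R) (y : Y) :
  0 <= theta -> (1 <= m)%nat -> (1 <= d)%nat -> classE e ->
  (exists a, 1 < a /\
     (* limsup_{R -> oo} ... < oo *)
     exists M R0, forall r, R0 <= r ->
       Rpower (La a r) (1 + theta / (2 * INR m)) / r
       * beta e (Rpower (La a r) (INR d / (2 * INR m)))
       * distY Y X y r <= M) ->
  exists x : nat -> Y,
    (forall n, (1 <= n)%nat -> mem X (x n)) /\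
    exists l, infinite_sum
      (fun k => let n := S k in
         Rpower 2 (INR n * theta) * beta e (2 ^ (n * d))
           * vnorm Y (vsub Y y (x n))
         + / 2 ^ (2 * n * m) * nX X (x n)) l.
Proof.
  intros Hth Hm Hd HE [a [Ha1 [M [R0 HM]]]].
  set (b := a - 1). assert (Hb : 0 < b) by (unfold b; lra).
  assert (Hm0 : 1 <= INR m) by (apply le_INR in Hm; simpl in Hm; lra).
  pose proof ln_lt_2 as Hl2.
  destruct (INR_unbounded (2 * (4 * a * a + Rabs R0 + 1))) as [K0 HK0].
  set (tm := fun (n : nat) (x : Y) => Rpower 2 (INR n * theta) * beta e (2 ^ (n * d))
           * vnorm Y (vsub Y y x) + / 2 ^ (2 * n * m) * nX X x).
  set (C := (Rabs M + 1) * exp (a * ln 4)).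
  set (h := fun k : nat => C * / b * exp (- b * ln (INR k + 1)) + (/ 2) ^ k).
  set (z0 := vscal Y 0 (vzero Y)).
  assert (Hz : mem X z0) by (apply mem_scal, mem_0).
  assert (Htm0 : forall n x, mem X x -> 0 <= tm n x).
  { intros n x Hx. unfold tm.
    assert (0 <= beta e (2 ^ (n * d))) by (apply beta_nonneg; auto; apply pow_le; lra).
    assert (0 < Rpower 2 (INR n * theta)) by apply exp_pos.
    pose proof (vnorm_pos Y (vsub Y y x)). pose proof (nX_pos Y X x Hx).
    assert (0 < / 2 ^ (2 * n * m)) by (apply Rinv_0_lt_compat, pow_lt; lra).
    apply Rplus_le_le_0_compat; apply Rmult_le_pos; try apply Rmult_le_pos; lra. }
  assert (Hstep : forall k, exists x, mem X x /\ ((K0 <= k)%nat -> tm (S k) x <= h k - h (S k))).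
  { intro k. destruct (Nat.le_gt_cases K0 k) as [Hk|Hk]; [| exists z0; split; auto; lia].
    set (n := S k).
    assert (HnK : INR n > 2 * (4 * a * a + Rabs R0 + 1)).
    { apply le_INR in Hk. unfold n. rewrite S_INR. lra. }
    assert (Hn1 : 1 <= INR n) by (unfold n; rewrite S_INR; pose proof (pos_INR k); lra).
    set (yv := INR n * INR m * ln 2).
    assert (Hy1 : yv >= INR n / 2) by (unfold yv; assert (INR n * INR m >= INR n) by nra; nra).
    pose proof (Rabs_pos R0). pose proof (Rle_abs R0). assert (0 <= a * a) by nra.
    assert (HT : 2 ^ (2 * n * m) = exp (2 * yv)).
    { rewrite exp_pow2, !mult_INR. unfold yv. simpl (INR 2). f_equal. ring. }
    assert (Hlo : 1 + yv <= exp yv) by apply exp_ineq1_le.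
    destruct (Ranalysis5.IVT_interv (fun r => La a r - exp (2 * yv)) (exp yv) (exp (2 * yv)))
      as [R [HR HRe]].
    { intros r Hr. apply La_cont. lra. }
    { apply exp_increasing; lra. }
    { unfold La, Rpower. rewrite ln_exp. rewrite <- exp_plus.
      assert (exp (yv + a * ln yv) < exp (2 * yv)); [|lra].
      apply exp_increasing. pose proof (key_lo a yv ltac:(lra) ltac:(lra)). lra. }
    { unfold La, Rpower. rewrite ln_exp.
      assert (0 < ln (2 * yv)) by (rewrite <- ln_1; apply ln_increasing; lra).
      assert (1 < exp (a * ln (2 * yv))) by (rewrite <- exp_0; apply exp_increasing; nra).
      pose proof (exp_pos (2 * yv)). nra. }
    cbv beta in HRe.
    assert (HLa : La a R = exp (2 * yv)) by lra.
    assert (HR0 : R0 <= R) by lra.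
    assert (HRpos : 0 < R) by (pose proof (exp_pos yv); lra).
    assert (HlnR : yv <= ln R) by (rewrite <- (ln_exp yv); apply ln_le'; [apply exp_pos| lra]).
    specialize (HM R HR0). rewrite HLa, !Rpower_exp in HM.
    replace (exp ((1 + theta / (2 * INR m)) * (2 * yv))) with (exp (2 * yv) * Rpower 2 (INR n * theta)) in HM
      by (unfold Rpower; rewrite <- exp_plus; f_equal; unfold yv; field; lra).
    replace (exp (INR d / (2 * INR m) * (2 * yv))) with (2 ^ (n * d)) in HM
      by (rewrite exp_pow2, mult_INR; f_equal; unfold yv; field; lra).
    set (P := Rpower 2 (INR n * theta)) in *.
    set (B := beta e (2 ^ (n * d))) in *.
    destruct (dist_spec Y X y R ltac:(lra)) as [HD Happ].
    set (D := distY Y X y R) in *.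
    assert (HP : 0 < P) by apply exp_pos.
    assert (HB : 0 <= B) by (apply beta_nonneg; auto; apply pow_le; lra).
    assert (HE2 : 0 < exp (2 * yv)) by apply exp_pos.
    set (Q := R / exp (2 * yv)).
    assert (HQ0 : 0 < Q) by (unfold Q; apply Rdiv_lt_0_compat; lra).
    assert (HPBD : P * B * D <= M * Q).
    { assert (Heq : P * B * D = (exp (2 * yv) * P / R * B * D) * Q) by (unfold Q; field; lra).
      rewrite Heq. apply Rmult_le_compat_r; lra. }
    assert (HQ : Q <= exp (a * ln 4) * exp (- a * ln (INR k + 2))).
    { assert (HlnR0 : 0 < ln R) by lra.
      assert (HQe : Q = exp (- (a * ln (ln R)))).
      { unfold La, Rpower in HLa. unfold Q. rewrite exp_Ropp, <- HLa. field.
        split; [apply Rgt_not_eq, exp_pos| lra]. }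
      rewrite HQe, <- exp_plus. apply exp_le'.
      assert ((INR k + 2) / 4 <= ln R) by (unfold n in *; rewrite S_INR in *; lra).
      assert (ln ((INR k + 2) / 4) <= ln (ln R)) by (apply ln_le'; [pose proof (pos_INR k)|]; lra).
      assert (Hl4 : ln ((INR k + 2) / 4) = ln (INR k + 2) - ln 4).
      { pose proof (pos_INR k). unfold Rdiv. rewrite ln_mult, ln_Rinv; try lra.
        }
      nra. }
    set (eps := (/ 2) ^ n / (P * B + 1)).
    assert (Hh2 : 0 < (/2) ^ n) by (apply pow_lt; lra).
    assert (Heps : 0 < eps) by (unfold eps; apply Rdiv_lt_0_compat; nra).
    destruct (Happ eps Heps) as [x [Hx [HxR Hxy]]].
    exists x. split; auto. intros _.
    unfold tm. fold n. fold P. fold B. rewrite HT.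
    assert (HPBe : P * B * eps <= (/ 2) ^ n).
    { unfold eps. assert (Heq2 : P * B * ((/ 2) ^ n / (P * B + 1)) = (/ 2) ^ n * (P * B / (P * B + 1))) by (field; nra).
      rewrite Heq2. assert (P * B / (P * B + 1) <= 1).
      { apply Rmult_le_reg_r with (P * B + 1); [nra|]. unfold Rdiv.
        rewrite Rmult_assoc, Rinv_l by nra. lra. }
      nra. }
    assert (HnX : / exp (2 * yv) * nX X x <= Q).
    { unfold Q, Rdiv. rewrite Rmult_comm. apply Rmult_le_compat_r; [apply Rlt_le, Rinv_0_lt_compat|]; lra. }
    pose proof (vnorm_pos Y (vsub Y y x)).
    assert (P * B * vnorm Y (vsub Y y x) <= P * B * D + P * B * eps).
    { rewrite <- Rmult_plus_distr_l. apply Rmult_le_compat_l; nra. }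
    assert (HG : exp (- a * ln (INR k + 2)) <= / b * (exp (- b * ln (INR k + 1)) - exp (- b * ln (INR (S k) + 1)))).
    { rewrite S_INR. replace (INR k + 1 + 1) with (INR k + 2) by ring.
      replace (- a) with (-(1 + b)) by (unfold b; ring). apply pseries_step; auto. }
    unfold h. fold n. replace ((/ 2) ^ k) with (2 * (/2) ^ n) by (unfold n; simpl; field).
    pose proof (Rabs_pos M). pose proof (Rle_abs M).
    pose proof (exp_pos (a * ln 4)).
    assert (M * Q <= Rabs M * Q) by (apply Rmult_le_compat_r; lra).
    assert ((Rabs M + 1) * Q <= C * (/ b * (exp (- b * ln (INR k + 1)) - exp (- b * ln (INR (S k) + 1))))).
    { unfold C. rewrite Rmult_assoc. apply Rmult_le_compat_l; [lra|].
      apply Rle_trans with (exp (a * ln 4) * exp (- a * ln (INR k + 2))); auto.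
      apply Rmult_le_compat_l; lra. }
    change (INR (S k)) with (INR n) in *.
    match goal with |- _ <= ?r => replace r with (C * (/ b * (exp (- b * ln (INR k + 1)) - exp (- b * ln (INR n + 1)))) + (/ 2) ^ n) by ring end.
    lra. }
  set (xk := fun k => proj1_sig (constructive_indefinite_description _ (Hstep k))).
  assert (Hxk : forall k, mem X (xk k) /\ ((K0 <= k)%nat -> tm (S k) (xk k) <= h k - h (S k))).
  { intro k. unfold xk. destruct (constructive_indefinite_description _ (Hstep k)); auto. }
  exists (fun n => match n with O => z0 | S k => xk k end). split.
  - intros [|n] Hn; [lia|]. apply Hxk.
  - apply (series_cv _ h K0).
    + intro k. apply (Htm0 (S k)). apply Hxk.
    + intro k. unfold h. assert (0 <= C).
      { unfold C. pose proof (Rabs_pos M). pose proof (exp_pos (a * ln 4)). nra. }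
      assert (0 <= (/2) ^ k) by (apply pow_le; lra).
      pose proof (exp_pos (- b * ln (INR k + 1))). pose proof (Rinv_0_lt_compat b Hb).
      assert (0 <= C * / b * exp (- b * ln (INR k + 1))) by (apply Rmult_le_pos; [apply Rmult_le_pos|]; lra).
      lra.
    + intros k Hk. apply (proj2 (Hxk k) Hk).
Qed.
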